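(* Let $A,\Delta A\in\mathbb{R}^{n\times m}$, $\widetilde A=A+\Delta A$, $1\le r<\min\{n,m\}$, $\operatorname{rank}(A)\ge r$, and assume $\sigma_r-\widetilde\sigma_{r+1}>0$ and $\widetilde\sigma_r-\sigma_{r+1}>0$. Then, with the notation of the context, \[\|\sin\Theta(U_1,\widetilde U_1)\|=\big\|F_U^{12}\circ(U_1^T(\Delta A)\widetilde V_2\widetilde\Sigma_2^T+\Sigma_1 V_1^T(\Delta A)^T\widetilde U_2)\big\|=\big\|F_U^{21}\circ(U_2^T(\Delta A)\widetilde V_1\widetilde\Sigma_1^T+\Sigma_2 V_2^T(\Delta A)^T\widetilde U_1)\big\|,\] \[\|\sin\Theta(V_1,\widetilde V_1)\|=\big\|F_V^{12}\circ(\Sigma_1^T U_1^T(\Delta A)\widetilde V_2+ V_1^T(\Delta A)^T\widetilde U_2\widetilde\Sigma_2)\big\|=\big\|F_V^{21}\circ(\Sigma_2^T U_2^T(\Delta A)\widetilde V_1+ V_2^T(\Delta A)^T\widetilde U_1\widetilde\Sigma_1)\big\|.\]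
   Context: $A=U\Sigma V^T$, $\widetilde A=\widetilde U\widetilde\Sigma\widetilde V^T$ are full SVDs ($U,\widetilde U\in\mathbb{R}^{n\times n}$, $V,\widetilde V\in\mathbb{R}^{m\times m}$ orthogonal, $\Sigma,\widetilde\Sigma\in\mathbb{R}^{n\times m}$ rectangular diagonal with nonincreasing nonnegative diagonals $\sigma_1\ge\dots$, $\widetilde\sigma_1\ge\dots$); $\sigma_i=\widetilde\sigma_i=0$ for $i>\min\{n,m\}$. Partition $U=(U_1\ U_2)$, $U_1\in\mathbb{R}^{n\times r}$; $V=(V_1\ V_2)$, $V_1\in\mathbb{R}^{m\times r}$; $\Sigma_1=\mathrm{diag}(\sigma_1,\dots,\sigma_r)$, $\Sigma_2\in\mathbb{R}^{(n-r)\times(m-r)}$ rectangular diagonal with diagonal $\sigma_{r+1},\sigma_{r+2},\dots$; likewise with tildes. $\circ$ is the Hadamard product; $\|\cdot\|$ is the spectral norm. $(F_U^{12})_{i,j-r}=1/(\widetilde\sigma_j^2-\sigma_i^2)$ for $1\le i\le r<j\le n$; $(F_U^{21})_{i-r,j}=1/(\widetilde\sigma_j^2-\sigma_i^2)$ for $r<i\le n$, $1\le j\le r$; $F_V^{12},F_V^{21}$ are defined the same way with $n$ replaced by $m$. For $X,\widetilde X\in\mathbb{R}^{d\times r}$ with orthonormal columns, if $\zeta_1\ge\dots\ge\zeta_r$ are the singular values of $X^T\widetilde X$, then $\sin\Theta(X,\widetilde X)=\mathrm{diag}(\sqrt{1-\zeta_1^2},\dots,\sqrt{1-\zeta_r^2})$.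 *)

(* Defs.v *)
From HB Require Import structures.
From mathcomp Require Import all_boot all_order all_algebra.
From mathcomp Require Import classical_sets reals.
Set Implicit Arguments. Unset Strict Implicit. Unset Printing Implicit Defensive.
Import Order.TTheory GRing.Theory Num.Theory.
Local Open Scope ring_scope.
Local Open Scope classical_set_scope.

Section Defs.
Variable R : realType.

(* Entry (i,j) of A, with 0-based nat indices; 0 when out of range. *)
Definition mget {p q} (A : 'M[R]_(p, q)) (i j : nat) : R :=
  match insub i, insub j with
  | Some i', Some j' => A i' j'
  | _, _ => 0
  end.

Definition subblock {p q} (r0 c0 p' q' : nat) (A : 'M[R]_(p, q)) : 'M[R]_(p', q') :=
  \matrix_(i < p', j < q') mget A (r0 + i) (c0 + j).

(* k-th diagonal entry (0-based) of a rectangular diagonal matrix: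
   sv S k = sigma_{k+1}; it is 0 for k >= min(p,q). *)
Definition sv {p q} (S : 'M[R]_(p, q)) (k : nat) : R := mget S k k.

Definition orthogonal_mx {p} (U : 'M[R]_p) : Prop := U^T *m U = 1%:M.

Definition rect_diag {p q} (S : 'M[R]_(p, q)) : Prop :=
  forall (i : 'I_p) (j : 'I_q), (i : nat) != j -> S i j = 0.

Definition is_svd {p q} (A : 'M[R]_(p, q)) (U : 'M[R]_p) (S : 'M[R]_(p, q))
    (V : 'M[R]_q) : Prop :=
  [/\ orthogonal_mx U, orthogonal_mx V, rect_diag S,
      (forall i j : nat, (i <= j)%N -> 0 <= sv S j <= sv S i)
    & A = U *m S *m V^T].

Definition vnorm {q} (x : 'cV[R]_q) : R := Num.sqrt (\sum_i x i 0 ^+ 2).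

Definition spec_norm {p q} (A : 'M[R]_(p, q)) : R :=
  sup [set y | exists x : 'cV[R]_q, vnorm x <= 1 /\ y = vnorm (A *m x)].

Definition hadamard {p q} (A B : 'M[R]_(p, q)) : 'M[R]_(p, q) :=
  \matrix_(i, j) (A i j * B i j).

(* sin Theta(X, Xt) = diag(sqrt(1 - zeta_i^2)), where the zeta_i are the
   diagonal entries of Z in an SVD  X^T Xt = P Z Q^T. *)
Definition sinTheta_of {r} (Z : 'M[R]_r) : 'M[R]_r :=
  \matrix_(i, j) (if i == j then Num.sqrt (1 - Z i i ^+ 2) else 0).

(* (F^{12})_{i,j-r} = 1/(st_j^2 - s_i^2), 1<=i<=r<j<=d  (0-based below) *)
Definition F12 (d r : nat) (s st : nat -> R) : 'M[R]_(r, d - r) :=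
  \matrix_(i, j) (1 / (st (r + j)%N ^+ 2 - s i ^+ 2)).
(* (F^{21})_{i-r,j} = 1/(st_j^2 - s_i^2), r<i<=d, 1<=j<=r *)
Definition F21 (d r : nat) (s st : nat -> R) : 'M[R]_(d - r, r) :=
  \matrix_(i, j) (1 / (st j ^+ 2 - s (r + i)%N ^+ 2)).

End Defs.

(* Main.v *)
Require Import Defs.
From HB Require Import structures.
From mathcomp Require Import all_boot all_order all_algebra.
From mathcomp Require Import classical_sets reals.
From mathcomp Require Import ring lra.
Import Order.TTheory GRing.Theory Num.Theory.
Local Open Scope ring_scope.
Set Implicit Arguments. Unset Strict Implicit.

Section Mget.
Variable R : realType.

Lemma mgetE p q (A : 'M[R]_(p,q)) (i : 'I_p) (j : 'I_q) : mget A i j = A i j.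
Proof. by rewrite /mget !valK. Qed.

Lemma mget0l p q (A : 'M[R]_(p,q)) i j : (p <= i)%N -> mget A i j = 0.
Proof. by move=> h; rewrite /mget insubN // -leqNgt. Qed.

Lemma mget0r p q (A : 'M[R]_(p,q)) i j : (q <= j)%N -> mget A i j = 0.
Proof. by move=> h; rewrite /mget; case: insubP => // *; rewrite insubN // -leqNgt. Qed.

Lemma mget_eq p q (A B : 'M[R]_(p,q)) :
  (forall i j : nat, (i < p)%N -> (j < q)%N -> mget A i j = mget B i j) -> A = B.
Proof. by move=> h; apply/matrixP => i j; rewrite -!mgetE h. Qed.

Lemma mgetM p q s (A : 'M[R]_(p,q)) (B : 'M[R]_(q,s)) i j :
  mget (A *m B) i j = \sum_(k < q) mget A i k * mget B k j.
Proof.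
case: (ltnP i p) => hi; last by rewrite mget0l // big1 // => k _; rewrite mget0l // mul0r.
case: (ltnP j s) => hj; last by rewrite mget0r // big1 // => k _; rewrite (mget0r B) // mulr0.
have -> : i = Ordinal hi by []. have -> : j = Ordinal hj by [].
by rewrite mgetE mxE; apply: eq_bigr => k _; rewrite !mgetE.
Qed.
Lemma mgetT p q (A : 'M[R]_(p,q)) i j : mget A^T i j = mget A j i.
Proof.
case: (ltnP i q) => hi; last by rewrite mget0l // mget0r.
case: (ltnP j p) => hj; last by rewrite mget0r // mget0l.
have -> : i = Ordinal hi by []. have -> : j = Ordinal hj by [].
by rewrite !mgetE mxE.
Qed.

Lemma mgetD p q (A B : 'M[R]_(p,q)) i j : mget (A + B) i j = mget A i j + mget B i j.
Proof.
case: (ltnP i p) => hi; last by rewrite !mget0l // addr0.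
case: (ltnP j q) => hj; last by rewrite !mget0r // addr0.
have -> : i = Ordinal hi by []. have -> : j = Ordinal hj by [].
by rewrite !mgetE mxE.
Qed.

Lemma mgetB p q (A B : 'M[R]_(p,q)) i j : mget (A - B) i j = mget A i j - mget B i j.
Proof.
case: (ltnP i p) => hi; last by rewrite !mget0l // subr0.
case: (ltnP j q) => hj; last by rewrite !mget0r // subr0.
have -> : i = Ordinal hi by []. have -> : j = Ordinal hj by [].
by rewrite !mgetE !mxE.
Qed.

Lemma mget1 p i j : mget (1%:M : 'M[R]_p) i j = ((i < p)%N && (i == j))%:R.
Proof.
case: (ltnP i p) => hi; last by rewrite mget0l.
case: (ltnP j p) => hj; last first.
  rewrite mget0r //=; case: eqP => // e; move: hi; rewrite e ltnNge hj //.
have -> : i = Ordinal hi by []. have -> : j = Ordinal hj by [].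
by rewrite mgetE mxE.
Qed.

Lemma mget_sub p q a b p' q' (A : 'M[R]_(p,q)) i j :
  mget (subblock a b p' q' A) i j = if ((i < p')%N && (j < q')%N) then mget A (a+i) (b+j) else 0.
Proof.
case: (ltnP i p') => hi; last by rewrite mget0l.
case: (ltnP j q') => hj; last by rewrite mget0r.
have -> : i = Ordinal hi by []. have -> : j = Ordinal hj by [].
by rewrite mgetE mxE.
Qed.

Lemma mget_diag p q (D : 'M[R]_(p,q)) i j : rect_diag D ->
  mget D i j = if i == j then sv D i else 0.
Proof.
move=> hD; case: eqP => [->//|ne].
case: (ltnP i p) => hi; last by rewrite mget0l.
case: (ltnP j q) => hj; last by rewrite mget0r.
have -> : i = Ordinal hi by []. have -> : j = Ordinal hj by [].
by rewrite mgetE hD //=; apply/eqP.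
Qed.

Lemma rect_diagT p q (D : 'M[R]_(p,q)) : rect_diag D -> rect_diag D^T.
Proof. by move=> h i j ne; rewrite mxE h // eq_sym. Qed.

Lemma svT p q (D : 'M[R]_(p,q)) k : sv D^T k = sv D k.
Proof. by rewrite /sv mgetT. Qed.

Lemma mget_diagr p q s (X : 'M[R]_(p,q)) (D : 'M[R]_(q,s)) i j : rect_diag D ->
  mget (X *m D) i j = mget X i j * sv D j.
Proof.
move=> hD; rewrite mgetM.
case: (ltnP j q) => hj.
  rewrite (bigD1 (Ordinal hj)) //= big1 ?addr0.
    by rewrite [mget D _ _]mget_diag //= eqxx.
  move=> k ne; rewrite [mget D _ _]mget_diag //; case: (@eqP _ (nat_of_ord k) j); last by rewrite mulr0.
  move=> e; have ek : k = Ordinal hj by apply: val_inj; rewrite /= e.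
  by rewrite ek eqxx in ne.
rewrite mget0r // mul0r big1 // => k _; rewrite [mget D _ _]mget_diag //; case: (@eqP _ (nat_of_ord k) j); last by rewrite mulr0.
by move=> e; move: (ltn_ord k); rewrite e ltnNge hj.
Qed.

Lemma mget_diagl p q s (D : 'M[R]_(p,q)) (X : 'M[R]_(q,s)) i j : rect_diag D ->
  mget (D *m X) i j = sv D i * mget X i j.
Proof.
move=> hD; rewrite -[D *m X]trmxK trmx_mul mgetT mget_diagr; last exact: rect_diagT.
by rewrite mgetT svT mulrC.
Qed.
End Mget.
Section Sel.
Variable R : realType.

Definition rowsel p q N a (A : 'M[R]_(p,q)) (A' : 'M[R]_(N,q)) :=
  forall i j, (i < p)%N -> mget A i j = mget A' (a+i) j.
Definition colsel p q Q b (B : 'M[R]_(p,q)) (B' : 'M[R]_(p,Q)) :=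
  forall i j, (j < q)%N -> mget B i j = mget B' i (b+j).

Lemma rowsel_mul p q N s a (A : 'M[R]_(p,q)) (A' : 'M[R]_(N,q)) (B : 'M[R]_(q,s)) :
  rowsel a A A' -> rowsel a (A *m B) (A' *m B).
Proof. by move=> h i j hi; rewrite !mgetM; apply: eq_bigr => k _; rewrite h. Qed.

Lemma colsel_mul p q Q s b (B : 'M[R]_(p,q)) (B' : 'M[R]_(p,Q)) (A : 'M[R]_(s,p)) :
  colsel b B B' -> colsel b (A *m B) (A *m B').
Proof. by move=> h i j hj; rewrite !mgetM; apply: eq_bigr => k _; rewrite h. Qed.

Lemma rowsel_T p q Q b (B : 'M[R]_(p,q)) (B' : 'M[R]_(p,Q)) :
  colsel b B B' -> rowsel b B^T B'^T.
Proof. by move=> h i j hi; rewrite !mgetT h. Qed.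

Lemma colsel_T p q N a (A : 'M[R]_(p,q)) (A' : 'M[R]_(N,q)) :
  rowsel a A A' -> colsel a A^T A'^T.
Proof. by move=> h i j hi; rewrite !mgetT h. Qed.

Lemma sub_colsel N Q b q (X : 'M[R]_(N,Q)) : colsel b (subblock 0 b N q X) X.
Proof.
move=> i j hj; rewrite mget_sub hj andbT add0n.
by case: ltnP => // hi; rewrite mget0l.
Qed.

Lemma sub_rowsel N Q a p (X : 'M[R]_(N,Q)) : rowsel a (subblock a 0 p Q X) X.
Proof.
move=> i j hi; rewrite mget_sub hi /= add0n.
by case: ltnP => // hj; rewrite mget0r.
Qed.

Lemma rect_diag_sub n m a p q (D : 'M[R]_(n,m)) : rect_diag D -> rect_diag (subblock a a p q D).
Proof.
move=> hD i j ne; rewrite mxE mget_diag //.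
by case: eqP => // /addnI e; move: ne; rewrite e eqxx.
Qed.

Lemma DR m' n m a p q (X : 'M[R]_(m',m)) (D : 'M[R]_(n,m)) :
  rect_diag D -> (p <= q)%N || (m <= a + q)%N ->
  colsel a (subblock 0 a m' q X *m (subblock a a p q D)^T) (X *m D^T).
Proof.
move=> hD hpq i j hj.
rewrite mget_diagr; last exact/rect_diagT/rect_diag_sub.
rewrite mget_diagr; last exact/rect_diagT.
rewrite !svT /sv !mget_sub hj add0n.
case: (ltnP j q) => hjq /=.
  by rewrite andbT; case: (ltnP i m') => hi //=; rewrite (@mget0l _ _ _ X) // !mul0r.
rewrite andbF mulr0 (@mget0r _ _ _ X) ?mul0r //.
case/orP: hpq => h; first by move: (leq_trans hj h); rewrite ltnNge hjq.
by apply: (leq_trans h); rewrite leq_add2l.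
Qed.

Lemma DL m' n m a p q (X : 'M[R]_(m',m)) (D : 'M[R]_(n,m)) :
  rect_diag D -> (p <= q)%N || (m <= a + q)%N ->
  rowsel a (subblock a a p q D *m (subblock 0 a m' q X)^T) (D *m X^T).
Proof.
move=> hD hpq; have := rowsel_T (DR X hD hpq).
by rewrite !trmx_mul !trmxK.
Qed.

Lemma sum_split (F : nat -> R) r n : (r <= n)%N ->
  \sum_(k < n) F k = \sum_(k < r) F k + \sum_(k < n - r) F (r + k)%N.
Proof.
move=> h; rewrite -!(big_mkord xpredT) (big_cat_nat (leq0n r) h) /=.
congr (_ + _); rewrite -{1}[r]add0n big_addn.
by rewrite big_mkord; apply: eq_bigr => k _; rewrite addnC.
Qed.

Lemma mget1_sub n r : (r <= n)%N -> forall i j, (i < r)%N -> (j < r)%N ->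
  mget (1%:M : 'M[R]_n) i j = mget (1%:M : 'M[R]_r) i j.
Proof. by move=> h i j hi hj; rewrite !mget1 hi (leq_trans hi h). Qed.

Lemma blk_orth n r (U : 'M[R]_n) : (r <= n)%N -> U^T *m U = 1%:M ->
  (subblock 0 0 n r U)^T *m subblock 0 0 n r U = 1%:M.
Proof.
move=> h hU; apply: mget_eq => i j hi hj.
rewrite (rowsel_mul _ (rowsel_T (sub_colsel _ _))) //.
rewrite (colsel_mul _ (sub_colsel _ _)) // !add0n hU.
exact: mget1_sub.
Qed.

Lemma blk_split n r (U : 'M[R]_n) : (r <= n)%N -> U *m U^T = 1%:M ->
  subblock 0 r n (n - r) U *m (subblock 0 r n (n - r) U)^T
  = 1%:M - subblock 0 0 n r U *m (subblock 0 0 n r U)^T.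
Proof.
move=> h hU; apply/eqP; rewrite eq_sym subr_eq -hU; apply/eqP.
apply: mget_eq => i j hi hj.
rewrite mgetD !mgetM (sum_split (fun k => mget U i k * mget U^T k j) h) addrC.
congr (_ + _); apply: eq_bigr => k _; rewrite !mgetT.
  by rewrite !(sub_colsel _ _) //.
by rewrite !(sub_colsel _ _).
Qed.

End Sel.
Section Norms.
Variable R : realType.
Local Open Scope classical_set_scope.

Lemma vnormE q (v : 'cV[R]_q) : vnorm v = Num.sqrt ((v^T *m v) 0 0).
Proof. by rewrite /vnorm mxE; congr Num.sqrt; apply: eq_bigr => i _; rewrite mxE expr2. Qed.

Lemma vnorm_ge0 q (v : 'cV[R]_q) : 0 <= vnorm v.
Proof. exact: sqrtr_ge0. Qed.

Lemma vnorm_gram p p' q (X : 'M[R]_(p,q)) (Y : 'M[R]_(p',q)) (x : 'cV[R]_q) :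
  X^T *m X = Y^T *m Y -> vnorm (X *m x) = vnorm (Y *m x).
Proof.
by move=> h; rewrite !vnormE !trmx_mul -!mulmxA [X^T *m _]mulmxA [Y^T *m _]mulmxA h.
Qed.

Lemma vnorm_orth q (Q : 'M[R]_q) (x : 'cV[R]_q) : Q^T *m Q = 1%:M -> vnorm (Q *m x) = vnorm x.
Proof.
move=> h; rewrite (@vnorm_gram _ _ _ Q (1%:M : 'M[R]_q)) ?mul1mx //.
by rewrite trmx1 mul1mx.
Qed.

Lemma spec_norm_gram p p' q (X : 'M[R]_(p,q)) (Y : 'M[R]_(p',q)) :
  X^T *m X = Y^T *m Y -> spec_norm X = spec_norm Y.
Proof.
move=> h; rewrite /spec_norm; congr sup; apply/seteqP; split => y [x [hx ->]];
  by exists x; split => //; rewrite (vnorm_gram _ h).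
Qed.

Lemma spec_norm_orth p q (X : 'M[R]_(p,q)) (Q : 'M[R]_q) :
  Q^T *m Q = 1%:M -> Q *m Q^T = 1%:M -> spec_norm (X *m Q^T) = spec_norm X.
Proof.
move=> h1 h2; rewrite /spec_norm; congr sup; apply/seteqP; split => y [x [hx ->]].
  exists (Q^T *m x); split; last by rewrite mulmxA.
  by rewrite vnorm_orth // trmxK.
exists (Q *m x); split; first by rewrite vnorm_orth.
by rewrite -mulmxA (mulmxA Q^T) h1 mul1mx.
Qed.

Lemma vnorm0 q : vnorm (0 : 'cV[R]_q) = 0.
Proof. by rewrite /vnorm big1 ?sqrtr0 // => i _; rewrite mxE expr0n. Qed.

Lemma entry_le_vnorm q (v : 'cV[R]_q) i : `|v i 0| <= vnorm v.
Proof.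
rewrite /vnorm -sqrtr_sqr ler_sqrt; last by apply: sumr_ge0 => k _; exact: sqr_ge0.
rewrite (bigD1 i) //= lerDl; apply: sumr_ge0 => k _; exact: sqr_ge0.
Qed.

Lemma spec_set_has_sup p q (X : 'M[R]_(p,q)) :
  has_sup [set y | exists x : 'cV[R]_q, vnorm x <= 1 /\ y = vnorm (X *m x)].
Proof.
split; first by exists (vnorm (X *m 0)); exists 0; rewrite vnorm0 ler01.
exists (Num.sqrt (\sum_i (\sum_j `|X i j|) ^+ 2)) => y [x [hx ->]].
rewrite /vnorm ler_sqrt; last by apply: sumr_ge0 => k _; exact: sqr_ge0.
apply: ler_sum => i _.
have h1 : `|(X *m x) i 0| <= \sum_j `|X i j|.
  rewrite mxE; apply: (le_trans (ler_norm_sum _ _ _)); apply: ler_sum => j _.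
  rewrite normrM; apply: ler_piMr => //.
  exact: le_trans (entry_le_vnorm x j) hx.
rewrite -real_normK ?num_real //.
have h0 : 0 <= `|(X *m x) i 0| by [].
nra.
Qed.

Lemma spec_ub p q (X : 'M[R]_(p,q)) (x : 'cV[R]_q) :
  vnorm x <= 1 -> vnorm (X *m x) <= spec_norm X.
Proof. by move=> hx; apply: sup_upper_bound (spec_set_has_sup X) _ _; exists x. Qed.

Lemma spec_ge0 p q (X : 'M[R]_(p,q)) : 0 <= spec_norm X.
Proof.
have := @spec_ub _ _ X 0; rewrite mulmx0.
have -> : vnorm (0 : 'cV[R]_p) = 0 by rewrite /vnorm big1 ?sqrtr0 // => i _; rewrite mxE expr0n.
have -> : vnorm (0 : 'cV[R]_q) = 0 by rewrite /vnorm big1 ?sqrtr0 // => i _; rewrite mxE expr0n.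
by apply.
Qed.

Lemma vnorm_eq0 q (v : 'cV[R]_q) : vnorm v = 0 -> v = 0.
Proof.
move=> h; apply/matrixP => i j; rewrite (ord1 j) mxE.
have := entry_le_vnorm v i; rewrite h => h'.
by apply/eqP; rewrite -normr_le0.
Qed.

Lemma vnormZ q (v : 'cV[R]_q) c : vnorm (c *: v) = `|c| * vnorm v.
Proof.
rewrite /vnorm -sqrtr_sqr -sqrtrM ?sqr_ge0 // mulr_sumr; congr Num.sqrt.
by apply: eq_bigr => i _; rewrite mxE exprMn.
Qed.

Lemma spec_bound p q (X : 'M[R]_(p,q)) (y : 'cV[R]_q) :
  vnorm (X *m y) <= spec_norm X * vnorm y.
Proof.
have [h|h] := eqVneq (vnorm y) 0.
  by rewrite h mulr0 (vnorm_eq0 h) mulmx0 vnorm0.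
have hp : 0 < vnorm y by rewrite lt_def h vnorm_ge0.
have := @spec_ub _ _ X ((vnorm y)^-1 *: y).
rewrite vnormZ ger0_norm ?invr_ge0 ?vnorm_ge0 // mulVf // lexx -scalemxAr vnormZ.
rewrite ger0_norm ?invr_ge0 ?vnorm_ge0 // => /(_ isT).
by rewrite ler_pdivrMl // mulrC.
Qed.

Lemma CS q (u v : 'cV[R]_q) : (u^T *m v) 0 0 <= vnorm u * vnorm v.
Proof.
have [hu|hu] := eqVneq (vnorm u) 0.
  by rewrite hu mul0r (vnorm_eq0 hu) trmx0 mul0mx mxE.
have [hv|hv] := eqVneq (vnorm v) 0.
  by rewrite hv mulr0 (vnorm_eq0 hv) mulmx0 mxE.
set a := vnorm u; set b := vnorm v.
have ha : 0 < a by rewrite lt_def hu vnorm_ge0.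
have hb : 0 < b by rewrite lt_def hv vnorm_ge0.
have ea : a ^+ 2 = \sum_i u i 0 ^+ 2 by rewrite /a /vnorm sqr_sqrtr // sumr_ge0 // => i _; exact: sqr_ge0.
have eb : b ^+ 2 = \sum_i v i 0 ^+ 2 by rewrite /b /vnorm sqr_sqrtr // sumr_ge0 // => i _; exact: sqr_ge0.
have key : 2 * a * b * (u^T *m v) 0 0 <= b ^+ 2 * a ^+ 2 + a ^+ 2 * b ^+ 2.
  rewrite {1}ea {2}eb !mulr_sumr -big_split /= mxE mulr_sumr; apply: ler_sum => i _.
  rewrite mxE; have := sqr_ge0 (b * u i 0 - a * v i 0); nra.
have hab : 0 < a * b by exact: mulr_gt0.
nra.
Qed.

Lemma spec_trmx_le p q (X : 'M[R]_(p,q)) : spec_norm X <= spec_norm X^T.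
Proof.
apply: ge_sup; first by exists (vnorm (X *m 0)); exists 0; rewrite vnorm0 ler01.
move=> t [x [hx ->]].
set y := X *m x.
have h1 : vnorm y ^+ 2 = (x^T *m (X^T *m y)) 0 0.
  rewrite /vnorm sqr_sqrtr; last by apply: sumr_ge0 => i _; exact: sqr_ge0.
  rewrite mulmxA -trmx_mul [RHS]mxE; apply: eq_bigr => i _; by rewrite [_^T _ _]mxE expr2.
have h2 := CS x (X^T *m y).
have h3 := spec_bound X^T y.
have h4 := vnorm_ge0 y. have h5 := vnorm_ge0 x. have h6 := spec_ge0 X^T.
have h7 := vnorm_ge0 (X^T *m y).
nra.
Qed.

Lemma spec_trmx p q (X : 'M[R]_(p,q)) : spec_norm X^T = spec_norm X.
Proof. by apply/le_anti; rewrite spec_trmx_le -{2}[X]trmxK spec_trmx_le. Qed.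
End Norms.
Section Main.
Variable R : realType.

Lemma trmxD' p q (A B : 'M[R]_(p,q)) : (A + B)^T = A^T + B^T.
Proof. by apply/matrixP => i j; rewrite !mxE. Qed.

Lemma key_identity n m (A dA : 'M[R]_(n, m)) (U Ut : 'M[R]_n) (S St : 'M[R]_(n, m)) (V Vt : 'M[R]_m) :
  is_svd A U S V -> is_svd (A + dA) Ut St Vt -> forall i c,
  mget (U^T *m dA *m Vt *m St^T + S *m V^T *m dA^T *m Ut) i c
  = mget (U^T *m Ut) i c * (sv St c ^+ 2 - sv S i ^+ 2).
Proof.
move=> [oU oV dS mS eA] [oUt oVt dSt mSt eAt] i c.
rewrite /orthogonal_mx in oU oV oUt oVt.
have h1 : U^T *m A = S *m V^T by rewrite eA !mulmxA oU mul1mx.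
have h5 : V^T *m A^T = S^T *m U^T.
  by rewrite -!trmx_mul eA -[U *m S *m V^T *m V]mulmxA oV mulmx1.
have h3 : (A + dA) *m Vt = Ut *m St by rewrite eAt -mulmxA oVt mulmx1.
have h4 : (A + dA)^T *m Ut = Vt *m St^T.
  by rewrite eAt !trmx_mul trmxK -!mulmxA oUt mulmx1.
have eW1 : U^T *m Ut *m St *m St^T = S *m V^T *m Vt *m St^T + U^T *m dA *m Vt *m St^T.
  by rewrite -(mulmxA U^T) -h3 mulmxA mulmxDr h1 !mulmxDl.
have eAT : A^T = (A + dA)^T - dA^T by rewrite trmxD' addrK.
have eW2 : S *m S^T *m (U^T *m Ut) = S *m V^T *m Vt *m St^T - S *m V^T *m dA^T *m Ut.
  rewrite -mulmxA (mulmxA S^T) -h5 eAT mulmxBr mulmxBl -!mulmxA.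
  by rewrite h4 mulmxBr.
have e1 : mget (U^T *m Ut *m St *m St^T) i c = mget (S *m V^T *m Vt *m St^T + U^T *m dA *m Vt *m St^T) i c by rewrite eW1.
have e2 : mget (S *m S^T *m (U^T *m Ut)) i c = mget (S *m V^T *m Vt *m St^T - S *m V^T *m dA^T *m Ut) i c by rewrite eW2.
have d1 : mget (U^T *m Ut *m St *m St^T) i c = mget (U^T *m Ut) i c * sv St c * sv St c.
  rewrite mget_diagr; last exact: rect_diagT.
  by rewrite mget_diagr // svT.
have d2 : mget (S *m S^T *m (U^T *m Ut)) i c = sv S i * (sv S i * mget (U^T *m Ut) i c).
  rewrite -mulmxA mget_diagl // mget_diagl; last exact: rect_diagT.
  by rewrite svT.
move: e1 e2; rewrite d1 d2 !mgetB !mgetD => e1 e2.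
have : mget (U^T *m dA *m Vt *m St^T) i c + mget (S *m V^T *m dA^T *m Ut) i c
   = mget (U^T *m Ut) i c * sv St c * sv St c - sv S i * (sv S i * mget (U^T *m Ut) i c).
  by rewrite e1 e2; ring.
by move=> ->; ring.
Qed.
End Main.
Section Main2.
Variable R : realType.

Lemma mget_had p q (F E : 'M[R]_(p,q)) i j : mget (hadamard F E) i j = mget F i j * mget E i j.
Proof.
case: (ltnP i p) => hi; last by rewrite !mget0l // mul0r.
case: (ltnP j q) => hj; last by rewrite !mget0r // mul0r.
have -> : i = Ordinal hi by []. have -> : j = Ordinal hj by [].
by rewrite !mgetE mxE.
Qed.

Lemma mget_F12 d r (s st : nat -> R) i j : (i < r)%N -> (j < d - r)%N ->
  mget (F12 d r s st) i j = 1 / (st (r + j)%N ^+ 2 - s i ^+ 2).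
Proof.
move=> hi hj; have -> : i = Ordinal hi by []. have -> : j = Ordinal hj by [].
by rewrite mgetE mxE.
Qed.

Lemma mget_F21 d r (s st : nat -> R) i j : (i < d - r)%N -> (j < r)%N ->
  mget (F21 d r s st) i j = 1 / (st j ^+ 2 - s (r + i)%N ^+ 2).
Proof.
move=> hi hj; have -> : i = Ordinal hi by []. have -> : j = Ordinal hj by [].
by rewrite mgetE mxE.
Qed.

Lemma Uside (n m r : nat) (A dA : 'M[R]_(n, m))
    (U Ut : 'M[R]_n) (S St : 'M[R]_(n, m)) (V Vt : 'M[R]_m) :
  (1 <= r)%N -> (r < minn n m)%N ->
  is_svd A U S V -> is_svd (A + dA) Ut St Vt ->
  0 < sv S r.-1 - sv St r -> 0 < sv St r.-1 - sv S r ->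
  let U1 := subblock 0 0 n r U in let U2 := subblock 0 r n (n - r) U in
  let V1 := subblock 0 0 m r V in let V2 := subblock 0 r m (m - r) V in
  let Ut1 := subblock 0 0 n r Ut in let Ut2 := subblock 0 r n (n - r) Ut in
  let Vt1 := subblock 0 0 m r Vt in let Vt2 := subblock 0 r m (m - r) Vt in
  let S1 := subblock 0 0 r r S in let S2 := subblock r r (n - r) (m - r) S in
  let St1 := subblock 0 0 r r St in let St2 := subblock r r (n - r) (m - r) St in
  (forall (P : 'M[R]_r) (Z : 'M[R]_r) (Q : 'M[R]_r), is_svd (U1^T *m Ut1) P Z Q ->
     spec_norm (sinTheta_of Z)
       = spec_norm (hadamard (F12 n r (sv S) (sv St))
           (U1^T *m dA *m Vt2 *m St2^T + S1 *m V1^T *m dA^T *m Ut2))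
     /\ spec_norm (sinTheta_of Z)
       = spec_norm (hadamard (F21 n r (sv S) (sv St))
           (U2^T *m dA *m Vt1 *m St1^T + S2 *m V2^T *m dA^T *m Ut1))).
Proof.
move=> r1 rmin hA hAt g1 g2 U1 U2 V1 V2 Ut1 Ut2 Vt1 Vt2 S1 S2 St1 St2 P Z Q hG.
have hk := key_identity hA hAt.
case: hA => oU oV dS mS eA; case: hAt => oUt oVt dSt mSt eAt.
rewrite /orthogonal_mx in oU oV oUt oVt.
have rn : (r < n)%N by move: rmin; rewrite leq_min => /andP[].
have rm : (r < m)%N by move: rmin; rewrite leq_min => /andP[].
have rn' : (r <= n)%N := ltnW rn.
have rm' : (r <= m)%N := ltnW rm.
set W := U^T *m Ut.
have had12 : hadamard (F12 n r (sv S) (sv St))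
           (U1^T *m dA *m Vt2 *m St2^T + S1 *m V1^T *m dA^T *m Ut2) = U1^T *m Ut2.
  apply: mget_eq => i j hi hj; rewrite mget_had mget_F12 // mgetD.
  rewrite -[U1^T *m dA *m Vt2 *m St2^T]mulmxA.
  rewrite (rowsel_mul _ (rowsel_mul _ (rowsel_T (sub_colsel _ _)))) // add0n.
  rewrite (colsel_mul _ (DR _ dSt _)) ?subnKC ?leqnn ?orbT //.
  rewrite (colsel_mul _ (sub_colsel _ _)) //.
  rewrite (rowsel_mul _ (rowsel_mul _ (DL _ dS _))) ?leqnn // add0n.
  rewrite (rowsel_mul _ (rowsel_T (sub_colsel _ _))) // add0n.
  rewrite (colsel_mul _ (sub_colsel _ _)) //.
  rewrite [U^T *m dA *m (Vt *m St^T)]mulmxA -mgetD hk -/W.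
  have hi' : (i <= r.-1)%N by rewrite -ltnS prednK.
  have := mS _ _ hi'; have := mSt _ _ (leq_addr j r);
  move=> /andP[h0 h1] /andP[h2 h3].
  have ne : sv St (r + j) ^+ 2 - sv S i ^+ 2 != 0.
    apply/negP => /eqP e.
    have hab : 0 < sv S i - sv St (r + j) by lra.
    have hab' : 0 < sv S i + sv St (r + j) by lra.
    nra.
  by rewrite div1r mulrCA mulVf ?mulr1.
have had21 : hadamard (F21 n r (sv S) (sv St))
           (U2^T *m dA *m Vt1 *m St1^T + S2 *m V2^T *m dA^T *m Ut1) = U2^T *m Ut1.
  apply: mget_eq => i j hi hj; rewrite mget_had mget_F21 // mgetD.
  rewrite -[U2^T *m dA *m Vt1 *m St1^T]mulmxA.
  rewrite (rowsel_mul _ (rowsel_mul _ (rowsel_T (sub_colsel _ _)))) //.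
  rewrite (colsel_mul _ (DR _ dSt _)) ?leqnn // add0n.
  rewrite (colsel_mul _ (sub_colsel _ _)) // add0n.
  rewrite (rowsel_mul _ (rowsel_mul _ (DL _ dS _))) ?subnKC ?leqnn ?orbT //.
  rewrite (rowsel_mul _ (rowsel_T (sub_colsel _ _))) //.
  rewrite (colsel_mul _ (sub_colsel _ _)) // add0n.
  rewrite [U^T *m dA *m (Vt *m St^T)]mulmxA -mgetD hk -/W.
  have hj' : (j <= r.-1)%N by rewrite -ltnS prednK.
  have := mSt _ _ hj'; have := mS _ _ (leq_addr i r).
  move=> /andP[h0 h1] /andP[h2 h3].
  have ne : sv St j ^+ 2 - sv S (r + i) ^+ 2 != 0.
    apply/negP => /eqP e.
    have hab : 0 < sv St j - sv S (r + i) by lra.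
    have hab' : 0 < sv St j + sv S (r + i) by lra.
    nra.
  by rewrite div1r mulrCA mulVf ?mulr1.
have oU' : U *m U^T = 1%:M := mulmx1C oU.
have oUt' : Ut *m Ut^T = 1%:M := mulmx1C oUt.
case: hG => oP oQ dZ mZ eG; rewrite /orthogonal_mx in oP oQ.
have oP' : P *m P^T = 1%:M := mulmx1C oP.
have oQ' : Q *m Q^T = 1%:M := mulmx1C oQ.
have H1 : U1^T *m U1 = 1%:M := blk_orth rn' oU.
have H3 : Ut1^T *m Ut1 = 1%:M := blk_orth rn' oUt.
have H2 : U2 *m U2^T = 1%:M - U1 *m U1^T := blk_split rn' oU'.
have H4 : Ut2 *m Ut2^T = 1%:M - Ut1 *m Ut1^T := blk_split rn' oUt'.
set G := U1^T *m Ut1 in eG.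
have gram21 : (U2^T *m Ut1)^T *m (U2^T *m Ut1) = 1%:M - G^T *m G.
  rewrite trmx_mul trmxK -mulmxA (mulmxA U2) H2 mulmxBl mul1mx mulmxBr H3.
  by congr (_ - _); rewrite /G trmx_mul trmxK !mulmxA.
have gram12 : (U1^T *m Ut2) *m (U1^T *m Ut2)^T = 1%:M - G *m G^T.
  rewrite trmx_mul trmxK -mulmxA (mulmxA Ut2) H4 mulmxBl mul1mx mulmxBr H1.
  by congr (_ - _); rewrite /G trmx_mul trmxK !mulmxA.
have ZT : Z^T = Z.
  apply: mget_eq => i j _ _; rewrite mgetT !mget_diag // eq_sym.
  by case: eqP => // ->.
have GtG : G^T *m G = Q *m (Z^T *m Z) *m Q^T.
  by rewrite eG !trmx_mul trmxK !mulmxA -(mulmxA _ P^T P) oP mulmx1.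
have GGt : G *m G^T = P *m (Z^T *m Z) *m P^T.
  by rewrite eG !trmx_mul trmxK !mulmxA -(mulmxA _ Q^T Q) oQ mulmx1 ZT.
set M21 := U2^T *m Ut1 in gram21 had21 *.
set M12 := U1^T *m Ut2 in gram12 had12 *.
have eZ : Z^T *m Z = 1%:M - (M21 *m Q)^T *m (M21 *m Q).
  have e : Q^T *m (G^T *m G) *m Q = Z^T *m Z.
    by rewrite GtG !mulmxA oQ mul1mx -mulmxA oQ mulmx1.
  have e2 : G^T *m G = 1%:M - M21^T *m M21 by rewrite gram21 opprB addrC subrK.
  by rewrite -e e2 mulmxBr mulmxBl mulmx1 oQ trmx_mul /M21 !trmx_mul !mulmxA.
have Zb : forall i, (i < r)%N -> sv Z i ^+ 2 <= 1.
  move=> i hi.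
  have e : mget (Z^T *m Z) i i = mget (1%:M - (M21 *m Q)^T *m (M21 *m Q)) i i by rewrite eZ.
  move: e; rewrite mget_diagl; last exact: rect_diagT.
  rewrite svT mgetB mget1 hi eqxx /= mgetM -expr2 => ->.
  rewrite lerBlDr lerDl; apply: sumr_ge0 => k _; rewrite mgetT -expr2; exact: sqr_ge0.
set Sn := sinTheta_of Z.
have dSn : rect_diag Sn.
  by move=> i j ne; rewrite mxE; case: eqP => // e; rewrite e eqxx in ne.
have svSn : forall i, (i < r)%N -> sv Sn i = Num.sqrt (1 - sv Z i ^+ 2).
  move=> i hi; rewrite /sv; have -> : i = Ordinal hi by [].
  by rewrite !mgetE mxE eqxx.
have SnSn : Sn^T *m Sn = 1%:M - Z^T *m Z.
  apply: mget_eq => i j hi hj.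
  rewrite mget_diagl; last exact: rect_diagT.
  rewrite mgetB mget_diagl; last exact: rect_diagT.
  rewrite !svT mget1 hi /= !mget_diag //.
  have [e|ne] := eqVneq i j; last by rewrite !mulr0 subr0.
  subst j.
  rewrite svSn // -expr2 sqr_sqrtr; last by have := Zb i hi; lra.
  by rewrite expr2.
have g21 : M21^T *m M21 = (Sn *m Q^T)^T *m (Sn *m Q^T).
  rewrite gram21 GtG trmx_mul trmxK [RHS]mulmxA -[Q *m Sn^T *m Sn]mulmxA SnSn.
  by rewrite mulmxBr mulmx1 mulmxBl oQ'.
have g12 : M12^T^T *m M12^T = (Sn *m P^T)^T *m (Sn *m P^T).
  rewrite trmxK gram12 GGt trmx_mul trmxK [RHS]mulmxA -[P *m Sn^T *m Sn]mulmxA SnSn.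
  by rewrite mulmxBr mulmx1 mulmxBl oP'.
split.
  by rewrite had12 -[spec_norm M12]spec_trmx (spec_norm_gram g12) spec_norm_orth.
by rewrite had21 (spec_norm_gram g21) spec_norm_orth.
Qed.
End Main2.
Lemma svd_T (R : realType) n m (A : 'M[R]_(n,m)) U S V : is_svd A U S V -> is_svd A^T V S^T U.
Proof.
case=> oU oV dS mS eA; split => //; first exact: rect_diagT.
  by move=> i j h; rewrite !svT; apply: mS.
by rewrite eA !trmx_mul trmxK mulmxA.
Qed.

Lemma sub_trmx (R : realType) n m a b p q (X : 'M[R]_(n,m)) :
  subblock a b p q X^T = (subblock b a q p X)^T.
Proof. by apply/matrixP => i j; rewrite !mxE mgetT. Qed.

Lemma F12T (R : realType) d r n m (S St : 'M[R]_(n,m)) :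
  F12 d r (sv S^T) (sv St^T) = F12 d r (sv S) (sv St).
Proof. by apply/matrixP => i j; rewrite !mxE !svT. Qed.

Lemma F21T (R : realType) d r n m (S St : 'M[R]_(n,m)) :
  F21 d r (sv S^T) (sv St^T) = F21 d r (sv S) (sv St).
Proof. by apply/matrixP => i j; rewrite !mxE !svT. Qed.

Unset Implicit Arguments.
Set Strict Implicit.

Theorem corollary2p4 (R : realType) (n m r : nat) (A dA : 'M[R]_(n, m))
    (U Ut : 'M[R]_n) (S St : 'M[R]_(n, m)) (V Vt : 'M[R]_m) :
  (1 <= r)%N -> (r < minn n m)%N -> (r <= \rank A)%N ->
  is_svd A U S V -> is_svd (A + dA) Ut St Vt ->
  0 < sv S r.-1 - sv St r -> 0 < sv St r.-1 - sv S r ->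
  let U1 := subblock 0 0 n r U in let U2 := subblock 0 r n (n - r) U in
  let V1 := subblock 0 0 m r V in let V2 := subblock 0 r m (m - r) V in
  let Ut1 := subblock 0 0 n r Ut in let Ut2 := subblock 0 r n (n - r) Ut in
  let Vt1 := subblock 0 0 m r Vt in let Vt2 := subblock 0 r m (m - r) Vt in
  let S1 := subblock 0 0 r r S in let S2 := subblock r r (n - r) (m - r) S in
  let St1 := subblock 0 0 r r St in let St2 := subblock r r (n - r) (m - r) St in
  (forall (P : 'M[R]_r) (Z : 'M[R]_r) (Q : 'M[R]_r), is_svd (U1^T *m Ut1) P Z Q ->
     spec_norm (sinTheta_of Z)
       = spec_norm (hadamard (F12 n r (sv S) (sv St))
           (U1^T *m dA *m Vt2 *m St2^T + S1 *m V1^T *m dA^T *m Ut2))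
     /\ spec_norm (sinTheta_of Z)
       = spec_norm (hadamard (F21 n r (sv S) (sv St))
           (U2^T *m dA *m Vt1 *m St1^T + S2 *m V2^T *m dA^T *m Ut1)))
  /\
  (forall (P : 'M[R]_r) (Z : 'M[R]_r) (Q : 'M[R]_r), is_svd (V1^T *m Vt1) P Z Q ->
     spec_norm (sinTheta_of Z)
       = spec_norm (hadamard (F12 m r (sv S) (sv St))
           (S1^T *m U1^T *m dA *m Vt2 + V1^T *m dA^T *m Ut2 *m St2))
     /\ spec_norm (sinTheta_of Z)
       = spec_norm (hadamard (F21 m r (sv S) (sv St))
           (S2^T *m U2^T *m dA *m Vt1 + V2^T *m dA^T *m Ut1 *m St1))).
Proof.
move=> r1 rmin _ hA hAt g1 g2 U1 U2 V1 V2 Ut1 Ut2 Vt1 Vt2 S1 S2 St1 St2.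
split; first exact: (Uside r1 rmin hA hAt g1 g2).
have hAT := svd_T hA; have hAtT := svd_T hAt; rewrite trmxD' in hAtT.
have rmin' : (r < minn m n)%N by rewrite minnC.
have g1' : 0 < sv S^T r.-1 - sv St^T r by rewrite !svT.
have g2' : 0 < sv St^T r.-1 - sv S^T r by rewrite !svT.
have H := Uside r1 rmin' hAT hAtT g1' g2'.
move=> P Z Q hz; have [e1 e2] := H P Z Q hz.
rewrite !sub_trmx !trmxK F12T F21T in e1 e2.
split; first by rewrite e1 addrC.
by rewrite e2 addrC.
Qed.
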